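(* Let $\mathbb{X}$ be a reflexive Kadets-Klee real Banach space and $\mathbb{Y}$ a smooth real Banach space (both of dimension greater than $1$). Let $T\in\mathbb{K}(\mathbb{X},\mathbb{Y})$ be nonzero. Then $T$ is a smooth point of $\mathbb{K}(\mathbb{X},\mathbb{Y})$ if and only if there exists $x_0\in S_{\mathbb{X}}$ such that for every $\epsilon>0$ there exists $\delta(\epsilon)>0$ such that for every $0<\delta\le\delta(\epsilon)$ (with $\delta<\|T\|$), \[M_T(\delta)\subseteq B(x_0,\epsilon)\cup B(-x_0,\epsilon).\] Moreover, the ''if'' direction holds without assuming that $\mathbb{X}$ is Kadets-Klee.
   Context: $\mathbb{K}(\mathbb{X},\mathbb{Y})$ is the Banach space of compact linear operators from $\mathbb{X}$ to $\mathbb{Y}$ with the operator norm. $S_{\mathbb{X}}$ is the unit sphere; $B(x,r)$ is the open ball of centre $x$ and radius $r$. A nonzero element $x$ of a Banach space $\mathbb{Z}$ is a smooth point if there is a unique $f\in\mathbb{Z}^*$ with $\|f\|=1$ and $f(x)=\|x\|$; a Banach space is smooth if every nonzero point is smooth. $\mathbb{X}$ is Kadets-Klee if whenever $x_n\to x$ weakly and $\|x_n\|\to\|x\|$, then $\|x_n-x\|\to0$. For nonzero $T$ and $0<\delta<\|T\|$, $M_T(\delta)=\{x\in S_{\mathbb{X}}:\|Tx\|>\|T\|-\delta\}$. *)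

(* Defs.v *)
From HB Require Import structures.
From mathcomp Require Import all_boot all_order all_algebra.
From mathcomp Require Import all_classical all_reals all_analysis.
Set Implicit Arguments. Unset Strict Implicit. Unset Printing Implicit Defensive.
Import Order.TTheory GRing.Theory Num.Theory.
Import numFieldNormedType.Exports.
Local Open Scope ring_scope.
Local Open Scope classical_set_scope.

Section Defs.
Context {R : realType}.

Definition is_linear {U V : normedModType R} (T : U -> V) : Prop :=
  (forall x y, T (x + y) = T x + T y) /\ (forall (a : R) x, T (a *: x) = a *: T x).

Definition cball1 (U : normedModType R) : set U := [set x | `|x| <= 1].
Definition sphere1 (U : normedModType R) : set U := [set x | `|x| = 1].
Definition oball {U : normedModType R} (x : U) (r : R) : set U :=
  [set y | `|y - x| < r].

Definition opnorm {U V : normedModType R} (T : U -> V) : R :=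
  sup [set `|T x| | x in @cball1 U].

Definition blf {U : normedModType R} (f : U -> R) : Prop :=
  (forall x y, f (x + y) = f x + f y) /\ (forall (a : R) x, f (a *: x) = a * f x) /\
  exists C : R, forall x, `|f x| <= C * `|x|.
Definition fnorm {U : normedModType R} (f : U -> R) : R :=
  sup [set `|f x| | x in @cball1 U].

Definition dim_gt1 (U : normedModType R) : Prop :=
  exists x y : U, forall a b : R, a *: x + b *: y = 0 -> a = 0 /\ b = 0.

(* reflexivity: every bounded linear functional on U^* is evaluation at
   some point of U (the canonical embedding U -> U^** is onto) *)
Definition reflexive_space (U : normedModType R) : Prop :=
  forall Phi : (U -> R) -> R,
    (forall f g, blf f -> blf g -> Phi (fun x => f x + g x) = Phi f + Phi g) ->
    (forall (a : R) f, blf f -> Phi (fun x => a * f x) = a * Phi f) ->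
    (exists C : R, forall f, blf f -> `|Phi f| <= C * fnorm f) ->
    exists x : U, forall f, blf f -> Phi f = f x.

Definition weak_cvg {U : normedModType R} (u : nat -> U) (x : U) : Prop :=
  forall f : U -> R, blf f -> (fun n => f (u n)) @ \oo --> f x.

Definition kadets_klee (U : normedModType R) : Prop :=
  forall (u : nat -> U) (x : U), weak_cvg u x ->
    (fun n => `|u n|) @ \oo --> `|x| ->
    (fun n => `|u n - x|) @ \oo --> (0 : R).

Definition supporting {U : normedModType R} (z : U) (f : U -> R) : Prop :=
  blf f /\ fnorm f = 1 /\ f z = `|z|.
Definition smooth_point {U : normedModType R} (z : U) : Prop :=
  z != 0 /\ (exists f, supporting z f) /\
  (forall f g, supporting z f -> supporting z g -> f = g).
Definition smooth_space (U : normedModType R) : Prop :=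
  forall z : U, z != 0 -> smooth_point z.

Definition compact_op {U V : normedModType R} (T : U -> V) : Prop :=
  is_linear T /\ compact (closure (T @` @cball1 U)).

Definition Kblf {U V : normedModType R} (Phi : (U -> V) -> R) : Prop :=
  (forall S S', compact_op S -> compact_op S' ->
     Phi (fun x => S x + S' x) = Phi S + Phi S') /\
  (forall (a : R) S, compact_op S -> Phi (fun x => a *: S x) = a * Phi S) /\
  exists C : R, forall S, compact_op S -> `|Phi S| <= C * opnorm S.
Definition Kfnorm {U V : normedModType R} (Phi : (U -> V) -> R) : R :=
  sup [set `|Phi S| | S in [set S : U -> V | compact_op S /\ opnorm S <= 1]].
Definition Ksupporting {U V : normedModType R} (T : U -> V) (Phi : (U -> V) -> R)
  : Prop := Kblf Phi /\ Kfnorm Phi = 1 /\ Phi T = opnorm T.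
(* T is a smooth point of K(U,V); functionals are identified when they agree on K(U,V) *)
Definition smooth_point_K {U V : normedModType R} (T : U -> V) : Prop :=
  T <> (fun _ => 0) /\ (exists Phi, Ksupporting T Phi) /\
  (forall Phi Psi, Ksupporting T Phi -> Ksupporting T Psi ->
     forall S, compact_op S -> Phi S = Psi S).

Definition M_T {U V : normedModType R} (T : U -> V) (delta : R) : set U :=
  [set x | `|x| = 1 /\ opnorm T - delta < `|T x|].

End Defs.

(* Main.v *)
Require Import Defs.
From HB Require Import structures.
From mathcomp Require Import all_boot all_order all_algebra.
From mathcomp Require Import all_classical all_reals all_analysis.
From mathcomp Require Import ring lra.
Import Order.TTheory GRing.Theory Num.Theory.
Import numFieldNormedType.Exports.
Local Open Scope ring_scope.
Local Open Scope classical_set_scope.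

Section HB.
Context {R : realType} {X : normedModType R}.

Definition adm (G : set (X * R)) :=
  [/\ G (0,0), (forall x a y b, G (x,a) -> G (y,b) -> G (x+y, a+b)),
      (forall k x a, G (x,a) -> G (k *: x, k * a)) &
      (forall x a, G (x,a) -> a <= `|x|)].

Lemma adm_fun G x a b : adm G -> G (x,a) -> G (x,b) -> a = b.
Proof.
case=> _ Hs Hk Hd Ha Hb.
have H1 := Hd _ _ (Hs _ _ _ _ Ha (Hk (-1) _ _ Hb)).
have H2 := Hd _ _ (Hs _ _ _ _ Hb (Hk (-1) _ _ Ha)).
move: H1 H2; rewrite scaleN1r subrr normr0 => H1 H2; lra.
Qed.

Lemma HB_norming (v : X) : exists f : X -> R,
  blf f /\ (forall x, `|f x| <= `|x|) /\ f v = `|v|.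
Proof.
pose G0 : set (X * R) := [set p | exists t : R, p = (t *: v, t * `|v|)].
have aG0 : adm G0.
  split.
  - by exists 0; rewrite scale0r mul0r.
  - move=> x a y b [t [-> ->]] [s [-> ->]]; exists (t + s).
    by rewrite scalerDl mulrDl.
  - move=> k x a [t [-> ->]]; exists (k * t); by rewrite scalerA mulrA.
  - move=> x a [t [-> ->]]; rewrite normrZ ler_wpM2r //; exact: ler_norm.
pose P (G : set (X * R)) := G = set0 \/ (adm G /\ G0 `<=` G).
have [A [PA Amax]] : exists A, P A /\ forall B, A `<` B -> ~ P B.
  apply: Zorn_bigcup => F FP Ftot.
  case: (pselect (exists G p, F G /\ G p)); last first.
    move=> N; left; apply/seteqP; split => // p [G FG Gp]; apply: N; by exists G, p.
  move=> [G1 [p [FG1 G1p]]]; right.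
  have nz G q : F G -> G q -> adm G /\ G0 `<=` G.
    move=> FG Gq; case: (FP _ FG) => // GE; by rewrite GE in Gq.
  have [aG1 sG1] := nz _ _ FG1 G1p.
  split; last by move=> q /sG1 Gq; exists G1.
  split.
  - by exists G1 => //; case: aG1.
  - move=> x a y b [Ga FGa Ha] [Gb FGb Hb].
    case: (Ftot _ _ FGa FGb) => sab.
      exists Gb => //; case: (nz _ _ FGb Hb) => -[_ Hs _ _] _; apply: Hs => //; exact: sab.
    exists Ga => //; case: (nz _ _ FGa Ha) => -[_ Hs _ _] _; apply: Hs => //; exact: sab.
  - move=> k x a [Ga FGa Ha]; exists Ga => //.
    by case: (nz _ _ FGa Ha) => -[_ _ Hk _] _; apply: Hk.
  - move=> x a [Ga FGa Ha]; by case: (nz _ _ FGa Ha) => -[_ _ _ Hd] _; apply: Hd.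
have [aA sA] : adm A /\ G0 `<=` A.
  case: PA => // A0; exfalso; apply: (Amax G0); last by rewrite /P; right; split.
  rewrite A0; split; first by [].
  move=> /(_ (0,0)) H; have : (set0 : set (X * R)) (0,0) by apply: H; exists 0; rewrite scale0r mul0r.
  by [].
have tot z : exists c, A (z, c).
  case: aA => A0 As Ak Ad.
  pose S' := [set d | exists x a, A (x,a) /\ d = a - `|x - z|].
  pose c := sup S'.
  have ub y b : A (y,b) -> ubound S' (`|y + z| - b).
    move=> Ayb d [x [a [Axa ->]]].
    have := Ad _ _ (As _ _ _ _ Axa Ayb).
    have := ler_normD (x - z) (y + z).
    have -> : x - z + (y + z) = x + y by rewrite addrACA addNr addr0.
    lra.
  have hS : has_sup S'.
    split; first by exists (0 - `|0 - z|), 0, 0.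
    by exists (`|0 + z| - 0); apply: ub.
  have cle y b : A (y,b) -> c <= `|y + z| - b.
    by move=> Ayb; apply: ge_sup; [case: hS|apply: ub].
  have cge x a : A (x,a) -> a - `|x - z| <= c.
    by move=> Axa; apply: sup_upper_bound => //; exists x, a.
  pose A' := [set p | exists x a t, A (x,a) /\ p = (x + t *: z, a + t * c)].
  have aA' : adm A'.
    split.
    - by exists 0, 0, 0; rewrite scale0r mul0r !addr0.
    - move=> x a y b [x1 [a1 [t1 [H1 [-> ->]]]]] [x2 [a2 [t2 [H2 [-> ->]]]]].
      exists (x1 + x2), (a1 + a2), (t1 + t2); split; first exact: As.
      congr pair; [rewrite scalerDl|rewrite mulrDl]; by rewrite !addrA; congr (_ + _); rewrite -!addrA; congr (_ + _); rewrite addrC.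
    - move=> k x a [x1 [a1 [t1 [H1 [-> ->]]]]].
      exists (k *: x1), (k * a1), (k * t1); split; first exact: Ak.
      by rewrite scalerDr scalerA mulrDr mulrA.
    - move=> x a [x1 [a1 [t1 [H1 [-> ->]]]]].
      have [t0|t0|->] := ltgtP t1 0; last by rewrite scale0r mul0r !addr0; exact: Ad.
      + pose s := - t1; have s0 : 0 < s by rewrite /s oppr_gt0.
        have := cge _ _ (Ak s^-1 _ _ H1).
        have -> : s^-1 *: x1 - z = s^-1 *: (x1 + t1 *: z).
          have t1n : t1 != 0 by apply/eqP => e; rewrite e ltxx in t0.
          by rewrite scalerDr scalerA /s invrN mulNr mulVf // scaleN1r.
        rewrite normrZ gtr0_norm ?invr_gt0 // => h.
        have := ler_wpM2l (ltW s0) h.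
        rewrite mulrBr !mulrA mulfV ?lt0r_neq0 // !mul1r /s; lra.
      + have := cle _ _ (Ak t1^-1 _ _ H1).
        have -> : t1^-1 *: x1 + z = t1^-1 *: (x1 + t1 *: z).
          by rewrite scalerDr scalerA mulVf ?lt0r_neq0 // scale1r.
        rewrite normrZ gtr0_norm ?invr_gt0 // => h.
        have := ler_wpM2l (ltW t0) h.
        rewrite mulrBr !mulrA mulfV ?lt0r_neq0 // !mul1r; lra.
  exists c; apply: contrapT => Nzc.
  apply: (Amax A').
    split.
      by move=> [x a] Axa; exists x, a, 0; rewrite scale0r mul0r !addr0.
    move=> /(_ (z, c)) H; apply: Nzc; apply: H.
    by exists 0, 0, 1; rewrite scale1r mul1r !add0r.
  right; split => // q /sA Aq; by exists q.1, q.2, 0; rewrite scale0r mul0r !addr0 -surjective_pairing.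
have [f Hf] := choice tot.
have fE x a : A (x,a) -> f x = a by move=> Axa; exact: (adm_fun _ _ _ _ aA (Hf x) Axa).
case: aA => A0 As Ak Ad.
have fD x y : f (x + y) = f x + f y by apply: fE; apply: As; apply: Hf.
have fZ k x : f (k *: x) = k * f x by apply: fE; apply: Ak; apply: Hf.
have fb x : `|f x| <= `|x|.
  rewrite ler_norml; apply/andP; split; last exact: Ad (Hf x).
  have := Ad _ _ (Hf (-1 *: x)); rewrite fZ scaleN1r normrN; lra.
exists f; split; last split => //.
  split => //; split => //; exists 1 => x; rewrite mul1r; exact: fb.
by apply: fE; apply: sA; exists 1; rewrite scale1r mul1r.
Qed.

End HB.
Section Ops.
Context {R : realType}.

Lemma bounded_setE (V : normedModType R) (A : set V) :
  bounded_set A -> exists M, 0 <= M /\ forall x, A x -> `|x| <= M.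
Proof.
move=> [M [_ HM]]; exists (`|M| + 1); split; first by rewrite addr_ge0.
by apply: HM; rewrite (le_lt_trans (ler_norm M)) // ltrDl.
Qed.

Section Ball.
Context {X : normedModType R}.
Variable g : X -> R.
Hypothesis gZ : forall k x, g (k *: x) = `|k| * g x.
Let E := [set g x | x in @cball1 R X].

Lemma gE0 : g 0 = 0.
Proof. by rewrite -(scale0r (0:X)) gZ normr0 mul0r. Qed.

Lemma ball_sup_ub : has_ubound E -> forall x, `|x| <= 1 -> g x <= sup E.
Proof.
move=> hu x x1; apply: sup_upper_bound; last by exists x.
by split => //; exists (g 0), 0 => //; rewrite /cball1 /= normr0.
Qed.

Lemma ball_sup_bound : has_ubound E -> forall x, g x <= sup E * `|x|.
Proof.
move=> hu x; have [->|x0] := eqVneq x 0.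
  by rewrite gE0 normr0 mulr0.
have nx : 0 < `|x| by rewrite normr_gt0.
have := ball_sup_ub hu (`|x|^-1 *: x).
rewrite normrZ normrV ?unitfE ?normr_eq0 // normr_id mulVf ?normr_eq0 // lexx => /(_ isT).
rewrite gZ normrV ?unitfE ?normr_eq0 // normr_id => h.
have := ler_wpM2r (ltW nx) h; rewrite mulrAC mulVf ?normr_eq0 // mul1r.
by [].
Qed.

Lemma ball_sup_le M : (forall x, `|x| <= 1 -> g x <= M) -> sup E <= M.
Proof.
move=> h; apply: ge_sup; first by exists (g 0), 0 => //; rewrite /cball1 /= normr0.
by move=> _ [x x1 <-]; apply: h.
Qed.

Lemma ball_sup_adh eps : has_ubound E -> 0 < eps ->
  exists x, `|x| <= 1 /\ sup E - eps < g x.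
Proof.
move=> hu e0.
have hs : has_sup E by split => //; exists (g 0), 0 => //; rewrite /cball1 /= normr0.
have [_ [x x1 <-] h] := sup_adherent e0 hs.
by exists x.
Qed.

End Ball.

Section Lin.
Context {X Y : normedModType R}.

Lemma lin0 (T : X -> Y) : is_linear T -> T 0 = 0.
Proof. by case=> _ HZ; rewrite -(scale0r (0:X)) HZ scale0r. Qed.
Lemma linN (T : X -> Y) x : is_linear T -> T (- x) = - T x.
Proof. by case=> _ HZ; rewrite -scaleN1r HZ scaleN1r. Qed.
Lemma linB (T : X -> Y) x y : is_linear T -> T (x - y) = T x - T y.
Proof. by move=> hT; case: (hT) => HD _; rewrite HD linN. Qed.

Lemma opnorm_set_ub (T : X -> Y) : compact_op T ->
  has_ubound [set `|T x| | x in @cball1 R X].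
Proof.
case=> _ /compact_bounded /bounded_setE [M [_ HM]].
exists M => _ [x x1 <-]; apply: HM; exact: subset_closure.
Qed.

Lemma normTZ (T : X -> Y) k x : is_linear T -> `|T (k *: x)| = `|k| * `|T x|.
Proof. by case=> _ HZ; rewrite HZ normrZ. Qed.

Lemma opnorm_bound (T : X -> Y) x : compact_op T -> `|T x| <= opnorm T * `|x|.
Proof.
move=> cT; apply: (ball_sup_bound (fun x => `|T x|)).
  by move=> k y; apply: normTZ; case: cT.
exact: opnorm_set_ub.
Qed.


Lemma opnorm_ub (T : X -> Y) x : compact_op T -> `|x| <= 1 -> `|T x| <= opnorm T.
Proof.
move=> cT x1; have := ball_sup_ub (fun x => `|T x|) (opnorm_set_ub T cT) x x1. rewrite /opnorm. done.
Qed.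

Lemma opnorm_ge0 (T : X -> Y) : compact_op T -> 0 <= opnorm T.
Proof.
move=> cT; apply: le_trans (opnorm_ub T 0 cT _); first by [].
by rewrite normr0.
Qed.

Lemma opnorm_le (T : X -> Y) M : (forall x, `|x| <= 1 -> `|T x| <= M) -> opnorm T <= M.
Proof. move=> h; exact: (ball_sup_le (fun x => `|T x|)). Qed.

End Lin.
End Ops.
Section Cpt.
Context {R : realType}.

Lemma closure_in_compact (Z : normedModType R) (A K : set Z) :
  compact K -> A `<=` K -> compact (closure A).
Proof.
move=> cK AK; apply: (subclosed_compact _ cK); first exact: closed_closure.
have cl : closed K by apply: compact_closed => //; exact: norm_hausdorff.
by rewrite [X in _ `<=` X](closure_id K).1 //; apply: closureS.
Qed.

Context {X Y : normedModType R}.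

Lemma compact_opZ (S : X -> Y) k : compact_op S -> compact_op (fun x => k *: S x).
Proof.
case=> [[SD SZ] cS]; split.
  split; first by move=> x y; rewrite SD scalerDr.
  by move=> a x; rewrite SZ !scalerA mulrC.
apply: (closure_in_compact _ _ ((fun y => k *: y) @` closure (S @` @cball1 R X))).
  apply: continuous_compact => //; apply: continuous_subspaceT.
  exact: scaler_continuous.
move=> _ [x x1 <-]; exists (S x) => //; apply: subset_closure; by exists x.
Qed.

Lemma compact_opD (S S' : X -> Y) : compact_op S -> compact_op S' ->
  compact_op (fun x => S x + S' x).
Proof.
case=> [[SD SZ] cS] [[SD' SZ'] cS']; split.
  split; first by move=> x y; rewrite SD SD' addrACA.
  by move=> a x; rewrite SZ SZ' scalerDr.
apply: (closure_in_compact _ _ ((fun z : Y * Y => z.1 + z.2) @`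
   (closure (S @` @cball1 R X) `*` closure (S' @` @cball1 R X)))).
  apply: continuous_compact; last exact: compact_setX.
  apply: continuous_subspaceT; exact: add_continuous.
move=> _ [x x1 <-]; exists (S x, S' x) => //; split; apply: subset_closure; by exists x.
Qed.

Lemma compact_op_rank1 (f : X -> R) (y : Y) : blf f ->
  compact_op (fun x => f x *: y).
Proof.
move=> [fD [fZ [C fC]]]; split.
  split; first by move=> a b; rewrite fD scalerDl.
  by move=> a x; rewrite fZ scalerA.
pose M := `|C|.
apply: (closure_in_compact _ _ ((fun t : R => t *: y) @` `[- M, M])).
  apply: continuous_compact; last exact: segment_compact.
  apply: continuous_subspaceT => t; exact: scalel_continuous.
move=> _ [x x1 <-]; exists (f x) => //.
rewrite /= in_itv /= -ler_norml /M; apply: le_trans (fC x) _.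
rewrite (le_trans (ler_norm _)) //.
rewrite normrM normr_id -[X in _ <= X]mulr1; apply: ler_wpM2l => //.

Qed.

End Cpt.
Section Ultra.
Context {R : realType}.

Lemma exists_ultra (A : set nat) : (forall N, exists n, (N <= n)%N /\ A n) ->
  exists U : set_system nat, UltraFilter U /\ (forall B, (\oo : set_system nat) B -> U B) /\ U A.
Proof.
move=> hA.
pose D N := [set n | (N <= n)%N /\ A n].
have FF : Filter (filter_from setT D).
  apply: filter_from_filter; first by exists 0%N.
  move=> i j _ _; exists (maxn i j) => // n [hn An].
  rewrite geq_max in hn; case/andP: hn => hi hj; by split.
have PF : ProperFilter (filter_from setT D).
  apply: filter_from_proper => // i _; have [n [hn An]] := hA i; by exists n.
have [U [UU sU]] := ultraFilterLemma PF.
exists U; split => //; split.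
  move=> B [N _ HN]; apply: sU; exists N => // n [hn _]; exact: HN.
by apply: sU; exists 0%N => // n [].
Qed.

Lemma ultra_cpt_cvg (Z : normedModType R) (U : set_system nat) (UF : UltraFilter U)
  (z : nat -> Z) (K : set Z) : compact K -> (forall n, K (z n)) -> exists l : Z, z @ U --> l.
Proof.
move=> cK Kz.
have FK0 : U (z @^-1` K).
  have -> : z @^-1` K = setT by apply/seteqP; split => // n _; exact: Kz.
  exact: filterT.
have FK : (z @ U) K by [].
have [l [Kl cl]] := cK _ _ FK.
exists l => B /= Bl.
have [//|nB] := in_ultra_setVsetC (z @^-1` B) UF.
have := cl (~` B) B nB Bl; by case=> y [] /= ?.
Qed.

Definition ulim (U : set_system nat) (a : nat -> R) : R := lim (a @ U).

Lemma ulimP (U : set_system nat) (UF : UltraFilter U) (a : nat -> R) M :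
  (forall n, `|a n| <= M) -> a @ U --> ulim U a.
Proof.
move=> hM.
have Ka : forall n, `[- M, M] (a n) by move=> n; rewrite /= in_itv /= -ler_norml.
have [l hl] := ultra_cpt_cvg _ _ UF a _ (@segment_compact R (- M) M) Ka.
by rewrite /ulim (cvg_lim _ hl).
Qed.

End Ultra.
Section Fn.
Context {R : realType}.

Lemma ulim_eq (U : set_system nat) (UF : UltraFilter U) (a : nat -> R) l :
  a @ U --> l -> ulim U a = l.
Proof. by move=> h; rewrite /ulim (cvg_lim _ h). Qed.

Lemma oo_U (U : set_system nat) (hoo : forall B, (\oo : set_system nat) B -> U B)
  (P : set nat) N : (forall n, (N <= n)%N -> P n) -> U P.
Proof. by move=> h; apply: hoo; exists N. Qed.

Context {X : normedModType R}.

Lemma blf0 (f : X -> R) : blf f -> f 0 = 0.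
Proof. by case=> _ [HZ _]; rewrite -(scale0r (0:X)) HZ mul0r. Qed.
Lemma blfN (f : X -> R) x : blf f -> f (- x) = - f x.
Proof. by case=> _ [HZ _]; rewrite -scaleN1r HZ mulN1r. Qed.
Lemma blfB (f : X -> R) x y : blf f -> f (x - y) = f x - f y.
Proof. by move=> hf; case: (hf) => HD _; rewrite HD blfN. Qed.
Lemma blfD (f : X -> R) x y : blf f -> f (x + y) = f x + f y.
Proof. by case. Qed.
Lemma blfZ (f : X -> R) k x : blf f -> f (k *: x) = k * f x.
Proof. by case=> _ []. Qed.

Lemma fnorm_set_ub (f : X -> R) : blf f -> has_ubound [set `|f x| | x in @cball1 R X].
Proof.
case=> _ [_ [C hC]]; exists `|C| => _ [x x1 <-].
apply: le_trans (hC x) _; rewrite (le_trans (ler_norm _)) // normrM.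
rewrite -[X in _ <= X]mulr1 ler_wpM2l // normr_id; exact: x1.
Qed.

Lemma blf_bound (f : X -> R) x : blf f -> `|f x| <= fnorm f * `|x|.
Proof.
move=> hf; apply: (ball_sup_bound (fun x => `|f x|)); last exact: fnorm_set_ub.
by move=> k y; rewrite blfZ // normrM.
Qed.

Lemma blf_ub (f : X -> R) x : blf f -> `|x| <= 1 -> `|f x| <= fnorm f.
Proof. move=> hf x1; exact: (ball_sup_ub (fun x => `|f x|) (fnorm_set_ub f hf)). Qed.

Lemma fnorm_le (f : X -> R) M : (forall x, `|x| <= 1 -> `|f x| <= M) -> fnorm f <= M.
Proof. move=> h; exact: (ball_sup_le (fun x => `|f x|)). Qed.

Lemma supp_bound (z : X) f x : supporting z f -> `|f x| <= `|x|.
Proof. by case=> hf [f1 _]; have := blf_bound f x hf; rewrite f1 mul1r. Qed.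

Lemma fnorm_ge (f : X -> R) x : blf f -> x != 0 -> `|f x| / `|x| <= fnorm f.
Proof.
move=> hf x0; have := blf_ub f (`|x|^-1 *: x) hf.
rewrite normrZ normrV ?unitfE ?normr_eq0 // normr_id mulVf ?normr_eq0 // lexx.
by move=> /(_ isT); rewrite blfZ // normrM normrV ?unitfE ?normr_eq0 // normr_id mulrC.
Qed.

Lemma mk_supporting (z : X) (f : X -> R) : blf f -> z != 0 ->
  (forall x, `|f x| <= `|x|) -> f z = `|z| -> supporting z f.
Proof.
move=> hf z0 hb fz; split => //; split => //.
apply/eqP; rewrite eq_le; apply/andP; split.
  by apply: fnorm_le => x x1; exact: le_trans (hb x) x1.
have := fnorm_ge f z hf z0; rewrite fz normr_id mulfV ?normr_eq0 //.
Qed.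

Lemma HB_sep (v : X) : (forall f : X -> R, blf f -> f v = 0) -> v = 0.
Proof.
move=> h; have [f [hf [_ fv]]] := HB_norming v.
by apply/eqP; rewrite -normr_eq0 -fv h.
Qed.

End Fn.
Section OpK.
Context {R : realType} {X Y : normedModType R}.

Lemma opnorm_gt0 (T : X -> Y) : compact_op T -> T <> (fun _ => 0) -> 0 < opnorm T.
Proof.
move=> cT T0; rewrite lt_neqAle opnorm_ge0 // andbT; apply/eqP => e.
apply: T0; apply: funext => x; apply/eqP; rewrite -normr_eq0 eq_le normr_ge0 andbT.
by have := opnorm_bound T x cT; rewrite -e mul0r.
Qed.

Lemma near_max (T : X -> Y) d : compact_op T -> 0 < d -> d <= opnorm T ->
  exists x, `|x| = 1 /\ opnorm T - d < `|T x|.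
Proof.
move=> cT d0 dT.
have [x [x1 hx]] := ball_sup_adh (fun x => `|T x|) d (opnorm_set_ub T cT) d0.
rewrite -/(opnorm T) in hx.
have Tx0 : 0 < `|T x| by apply: le_lt_trans hx; rewrite subr_ge0.
have x0 : x != 0 by apply/eqP => e; rewrite e lin0 ?normr0 ?ltxx in Tx0; case: cT.
have nx : 0 < `|x| by rewrite normr_gt0.
exists (`|x|^-1 *: x); split.
  by rewrite normrZ normrV ?unitfE ?normr_eq0 // normr_id mulVf ?normr_eq0.
rewrite normTZ; last by case: cT.
rewrite normrV ?unitfE ?normr_eq0 // normr_id.
apply: lt_le_trans hx _; rewrite ler_pMl // invf_ge1 //.
Qed.

Lemma opnormZ_le (T : X -> Y) k : compact_op T -> opnorm (fun x => k *: T x) <= `|k| * opnorm T.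
Proof.
move=> cT; apply: opnorm_le => x x1; rewrite normrZ ler_wpM2l //.
apply: le_trans (opnorm_bound T x cT) _; rewrite -[X in _ <= X]mulr1 ler_wpM2l //.
exact: opnorm_ge0.
Qed.

Lemma Kbound (Psi : (X -> Y) -> R) S : Kblf Psi -> Kfnorm Psi = 1 -> compact_op S ->
  `|Psi S| <= opnorm S.
Proof.
move=> [PD [PZ [C hC]]] K1 cS.
have ub : has_ubound [set `|Psi S| | S in [set S : X -> Y | compact_op S /\ opnorm S <= 1]].
  exists `|C| => _ [S' [cS' S'1] <-]; apply: le_trans (hC _ cS') _.
  rewrite (le_trans (ler_norm _)) // normrM -[X in _ <= X]mulr1 ler_wpM2l //.
  by rewrite ger0_norm // opnorm_ge0.
have [e|Sn0] := eqVneq (opnorm S) 0.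
  by have := hC _ cS; rewrite e mulr0.
have Sp : 0 < opnorm S by rewrite lt_neqAle eq_sym Sn0 opnorm_ge0.
pose k := (opnorm S)^-1.
have cS' := compact_opZ S k cS.
have S'1 : opnorm (fun x => k *: S x) <= 1.
  apply: le_trans (opnormZ_le S k cS) _.
  by rewrite /k normrV ?unitfE // ger0_norm ?opnorm_ge0 // mulVf.
have := @sup_upper_bound _ _ (conj (ex_intro _ _ (ex_intro2 _ _ _ (conj cS' S'1) erefl)) ub) _
  (ex_intro2 _ _ _ (conj cS' S'1) erefl).
rewrite -/(Kfnorm Psi) K1 PZ // normrM /k normrV ?unitfE // ger0_norm ?opnorm_ge0 //.
by rewrite ler_pdivrMl // mulr1.
Qed.

Lemma Ksupp_point (T : X -> Y) x g : compact_op T -> `|x| = 1 -> `|T x| = opnorm T ->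
  0 < opnorm T -> supporting (T x) g -> Ksupporting T (fun S => g (S x)).
Proof.
move=> cT x1 Tx Tp gs.
have hg := gs.1.
have gb y : `|g y| <= `|y| by apply: supp_bound gs.
have gTx : g (T x) = opnorm T by rewrite gs.2.2 Tx.
have bnd S : compact_op S -> `|g (S x)| <= opnorm S.
  move=> cS; apply: le_trans (gb _) _; apply: le_trans (opnorm_bound S x cS) _.
  by rewrite x1 mulr1.
split; last split => //.
- split; first by move=> S S' _ _; rewrite blfD.
  split; first by move=> a S _; rewrite blfZ.
  by exists 1 => S cS; rewrite mul1r; apply: bnd.
- pose k := (opnorm T)^-1.
  have cT' := compact_opZ T k cT.
  have T'1 : opnorm (fun x => k *: T x) <= 1.
    apply: le_trans (opnormZ_le T k cT) _.
    by rewrite /k normrV ?unitfE ?lt0r_neq0 // ger0_norm ?opnorm_ge0 // mulVf ?lt0r_neq0.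
  have E1 : `|g (k *: T x)| = 1.
    by rewrite blfZ // gTx /k mulVf ?lt0r_neq0 // normr1.
  apply/eqP; rewrite eq_le; apply/andP; split.
    apply: ge_sup; first by exists 1, (fun x => k *: T x).
    by move=> _ [S [cS S1] <-]; apply: le_trans (bnd S cS) S1.
  have ub : has_ubound [set `|g (S x)| | S in [set S : X -> Y | compact_op S /\ opnorm S <= 1]].
    by exists 1 => _ [S [cS S1] <-]; apply: le_trans (bnd S cS) S1.
  rewrite -E1; apply: sup_upper_bound; last by exists (fun x => k *: T x).
  by split => //; exists 1, (fun x => k *: T x).
Qed.

End OpK.
Section UL2.
Context {R : realType}.
Variables (U : set_system nat) (UF : UltraFilter U).
Hypothesis hoo : forall B, (\oo : set_system nat) B -> U B.

Lemma ulimD (a b : nat -> R) Ma Mb : (forall n, `|a n| <= Ma) -> (forall n, `|b n| <= Mb) ->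
  ulim U (fun n => a n + b n) = ulim U a + ulim U b.
Proof.
move=> ha hb; apply: ulim_eq; exact: cvgD (ulimP U UF a Ma ha) (ulimP U UF b Mb hb).
Qed.

Lemma ulimM (a : nat -> R) k M : (forall n, `|a n| <= M) ->
  ulim U (fun n => k * a n) = k * ulim U a.
Proof.
move=> ha; apply: ulim_eq; exact: cvgMl_tmp (ulimP U UF a M ha).
Qed.

Lemma ulim_le (a : nat -> R) M c N : (forall n, `|a n| <= M) ->
  (forall n, (N <= n)%N -> a n <= c) -> ulim U a <= c.
Proof.
move=> ha hc; apply: (cvgr_to_le (ulimP U UF a M ha)).
exact: (oo_U U hoo [set n | a n <= c] N hc).
Qed.

Lemma ulim_ge (a : nat -> R) M c N : (forall n, `|a n| <= M) ->
  (forall n, (N <= n)%N -> c <= a n) -> c <= ulim U a.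
Proof.
move=> ha hc; apply: (cvgr_to_ge (ulimP U UF a M ha)).
exact: (oo_U U hoo [set n | c <= a n] N hc).
Qed.

End UL2.

Lemma einv_small {R : realType} (K e : R) : 0 <= K -> 0 < e ->
  exists N, forall n, (N <= n)%N -> K * n.+1%:R^-1 <= e.
Proof.
move=> K0 e0; exists (Num.truncn (K / e)) => n hn.
have h1 : K / e < n.+1%:R.
  apply: lt_le_trans (truncnS_gt _) _; rewrite ler_nat ltnS; exact: hn.
have h2 : K < n.+1%:R * e by rewrite -ltr_pdivrMr.
rewrite ler_pdivrMr ?ltr0n // mulrC; exact: ltW.
Qed.
Lemma arith1 {R : realType} (a b c d k e' : R) : a <= b + c -> c <= k -> d <= k -> 2 * k <= e' -> a - e' <= b - d.
Proof. lra. Qed.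
Lemma arith2 {R : realType} (P a b t n e e' : R) : P <= a + b + t -> b <= n * e -> t <= e -> (n + 1) * e <= e' -> P - e' <= a.
Proof. move=> h1 h2 h3; rewrite mulrDl mul1r; lra. Qed.

Section IfDir.
Context {R : realType} {X Y : normedModType R}.
Variables (T : X -> Y) (x0 : X).
Hypotheses (sY : smooth_space Y) (cT : compact_op T) (T0 : T <> (fun _ => 0))
  (x01 : `|x0| = 1)
  (H : forall eps : R, 0 < eps -> exists d0 : R, 0 < d0 /\
        forall delta : R, 0 < delta -> delta <= d0 -> delta < opnorm T ->
          M_T T delta `<=` oball x0 eps `|` oball (- x0) eps).

Let Tp : 0 < opnorm T := opnorm_gt0 T cT T0.

Lemma cond_pick eps : 0 < eps -> exists d1, 0 < d1 /\ forall delta x, 0 < delta ->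
  delta <= d1 -> M_T T delta x -> `|x - x0| < eps \/ `|x + x0| < eps.
Proof.
move=> e0; have Tp0 := Tp; have [d0 [d00 hd]] := H eps e0.
exists (Num.min d0 (opnorm T / 2)); split; first by rewrite lt_min d00 divr_gt0.
move=> d x dpos; rewrite le_min => /andP [dle0 dle1] hx.
have dlt : d < opnorm T by apply: le_lt_trans dle1 _; lra.
case: (hd d dpos dle0 dlt x hx) => h; [left|right]; move: h; by rewrite /oball /= ?opprK.
Qed.

Lemma attain : `|T x0| = opnorm T.
Proof.
apply/eqP; rewrite eq_le; apply/andP; split.
  by apply: opnorm_ub cT _; rewrite x01.
apply/ler_addgt0Pr => e e0; have Tp0 := Tp.
pose eps := e / (2 * (opnorm T + 1)).
have p1 : 0 < 2 * (opnorm T + 1) by lra.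
have eps0 : 0 < eps by rewrite divr_gt0.
have epsE : eps * (2 * (opnorm T + 1)) = e by rewrite /eps mulfVK // lt0r_neq0.
have epsT : opnorm T * eps <= e / 2 by nra.
have [d1 [d10 hd1]] := cond_pick eps eps0.
pose d := Num.min d1 (Num.min (e / 2) (opnorm T)).
have d0 : 0 < d by rewrite !lt_min d10 Tp andbT; lra.
have dd1 : d <= d1 by rewrite ge_min lexx.
have de : d <= e / 2 by rewrite /d !ge_min lexx orbT.
have dT : d <= opnorm T by rewrite /d !ge_min lexx !orbT.
have [x [x1 hx]] := near_max T d cT d0 dT.
have Mx : M_T T d x by split.
have lT := cT.1.
have bnd z : `|T z| <= opnorm T * `|z| by apply: opnorm_bound.
case: (hd1 d x d0 dd1 Mx) => hxx.
- have E : T x = T x0 + T (x - x0) by rewrite linB // addrC subrK.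
  have := ler_normD (T x0) (T (x - x0)); rewrite -E => h1.
  have h2 : opnorm T * `|x - x0| <= opnorm T * eps by rewrite ler_wpM2l ?opnorm_ge0 // ltW.
  have := bnd (x - x0); lra.
- have E : T x = T (x + x0) - T x0 by rewrite -linB // addrK.
  have := ler_normB (T (x + x0)) (T x0); rewrite -E => h1.
  have h2 : opnorm T * `|x + x0| <= opnorm T * eps by rewrite ler_wpM2l ?opnorm_ge0 // ltW.
  have := bnd (x + x0); lra.
Qed.


Lemma step (Psi : (X -> Y) -> R) S e : Ksupporting T Psi -> compact_op S -> 0 < e -> e <= 1 ->
  exists (t : R) (x : X) (h : Y -> R), [/\ 0 < t, t <= e, `|x - x0| < e,
    supporting (T x + t *: S x) h &
    Psi S <= h (S x) + t /\ `|T x + t *: S x - T x0| <= (opnorm T + opnorm S) * e].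
Proof.
move=> [[PD [PZ PC]] [PK1 PT]] cS e0 e1; have Tp0 := Tp.
pose nS := opnorm S; have nS0 : 0 <= nS := opnorm_ge0 S cS.
have [d1 [d10 hd1]] := cond_pick e e0.
pose c := 2 * nS + 2; have c0 : 0 < c by rewrite /c; lra.
pose t := Num.min e (Num.min (d1 / c) (opnorm T / c)).
have t0 : 0 < t by rewrite !lt_min e0 !divr_gt0.
have te : t <= e by rewrite ge_min lexx.
have tc1 : t * c <= d1.
  rewrite -ler_pdivlMr //; by rewrite /t !ge_min lexx orbT.
have tc2 : t * c <= opnorm T.
  rewrite -ler_pdivlMr //; by rewrite /t !ge_min lexx !orbT.
have t1 : t <= 1 by apply: le_trans te e1.
have tt : t * t <= t by rewrite ler_piMr // ltW.
pose A := fun x => T x + t *: S x.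
have cS' := compact_opZ S t cS.
have cA : compact_op A := compact_opD T _ cT cS'.
have lT := cT.1; have lS := cS.1.
have hA : opnorm T <= opnorm A + t * nS.
  apply: opnorm_le => x x1.
  have E : T x = A x - t *: S x by rewrite /A addrK.
  rewrite E; apply: le_trans (ler_normB _ _) _; rewrite normrZ gtr0_norm //.
  apply: lerD; first exact: (opnorm_ub A x cA x1).
  rewrite (ler_wpM2l (ltW t0)) //; exact: (opnorm_ub S x cS x1).
have tcE : t * c = t * nS * 2 + t * 2 by rewrite /c; ring.
have tc2' : t * nS * 2 + t * 2 <= opnorm T by rewrite -tcE.
have dA : t * t <= opnorm A by lra.
have [x [x1 hx]] := near_max A (t * t) cA (mulr_gt0 t0 t0) dA.
have Sx : `|S x| <= nS by apply: (opnorm_ub S x cS); rewrite x1.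
have tSx : t * `|S x| <= t * nS by rewrite (ler_wpM2l (ltW t0)).
have Ax : `|A x| <= `|T x| + t * `|S x|.
  by apply: le_trans (ler_normD _ _) _; rewrite normrZ gtr0_norm.
pose d := t * (2 * nS + 1).
have dE : d = t * nS * 2 + t by rewrite /d; ring.
have d0 : 0 < d by rewrite /d mulr_gt0 //; lra.
have dd1 : d <= d1.
  apply: le_trans tc1; rewrite dE tcE; lra.
have Tx : opnorm T - d < `|T x| by lra.
have Mx : M_T T d x by split.
have [x' [x'1 [x'e Ax']]] : exists x', `|x'| = 1 /\ `|x' - x0| < e /\ `|A x'| = `|A x|.
  case: (hd1 d x d0 dd1 Mx) => h; first by exists x.
  exists (- x); split; first by rewrite normrN.
  split; first by rewrite -opprD normrN.
  by rewrite /A (linN T x lT) (linN S x lS) scalerN -opprD normrN.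
have Apos : 0 < `|A x'| by rewrite Ax'; lra.
have A0 : A x' != 0 by rewrite -normr_gt0.
case: (sY _ A0) => _ [[h hs] _].
exists t, x', h; split => //; split.
- have PsiA : Psi A = Psi T + t * Psi S by rewrite /A PD // PZ.
  have PA : Psi A <= opnorm A.
    apply: le_trans (ler_norm _) _; apply: Kbound => //; split => //.
  have hAx : h (A x') = `|A x'| by case: hs => _ [].
  have hAx2 : h (A x') = h (T x') + t * h (S x') by rewrite /A (blfD h _ _ hs.1) (blfZ h _ _ hs.1).
  have hTx : h (T x') <= opnorm T.
    apply: le_trans (ler_norm _) _; apply: le_trans (supp_bound _ _ _ hs) _.
    by apply: (opnorm_ub T x' cT); rewrite x'1.
  have key : t * Psi S < t * (h (S x') + t) by rewrite mulrDr; lra.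
  by apply: ltW; move: key; rewrite ltr_pM2l.
- have E : T x' + t *: S x' - T x0 = T (x' - x0) + t *: S x' by rewrite linB // addrAC.
  rewrite E; apply: le_trans (ler_normD _ _) _; rewrite normrZ gtr0_norm // mulrDl.
  apply: lerD.
    apply: le_trans (opnorm_bound T _ cT) _; rewrite ler_wpM2l ?opnorm_ge0 // ltW //.
  have Sx' : `|S x'| <= nS by apply: (opnorm_ub S x' cS); rewrite x'1.
  rewrite mulrC; apply: ler_pM => //; exact: ltW.
Qed.


Lemma main_ineq (Psi : (X -> Y) -> R) S g : Ksupporting T Psi -> compact_op S ->
  supporting (T x0) g -> (forall h, supporting (T x0) h -> h = g) -> Psi S <= g (S x0).
Proof.
move=> hK cS gs guniq; have Tp0 := Tp.
pose nS := opnorm S; have nS0 : 0 <= nS := opnorm_ge0 S cS.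
pose e (n : nat) : R := n.+1%:R^-1.
have e0 n : 0 < e n by rewrite /e invr_gt0 ltr0n.
have e1 n : e n <= 1 by rewrite /e invf_le1 // ?ler1n // ltr0n.
have st n := step Psi S (e n) hK cS (e0 n) (e1 n).
have [tf ht] := choice st.
have [xf hx] := choice ht.
have [hf hh] := choice hx.
have [U [UF [hoo _]]] := exists_ultra setT (fun N => ex_intro _ N (conj (leqnn N) I)).
pose hl y := ulim U (fun n => hf n y).
have hs n : supporting (T (xf n) + tf n *: S (xf n)) (hf n) by case: (hh n).
have hb n y : `|hf n y| <= `|y| by apply: supp_bound (hs n).
have hlD y z : hl (y + z) = hl y + hl z.
  rewrite /hl -(ulimD U UF _ _ _ _ (fun n => hb n y) (fun n => hb n z)).
  by congr ulim; apply: funext => n; rewrite blfD //; case: (hs n).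
have hlZ k y : hl (k *: y) = k * hl y.
  rewrite /hl -(ulimM U UF _ k _ (fun n => hb n y)).
  by congr ulim; apply: funext => n; rewrite blfZ //; case: (hs n).
have hlb y : `|hl y| <= `|y|.
  rewrite ler_norml; apply/andP; split.
    apply: (ulim_ge U UF hoo _ _ _ 0%N (fun n => hb n y)) => n _.
    by have := hb n y; rewrite ler_norml => /andP [].
  apply: (ulim_le U UF hoo _ _ _ 0%N (fun n => hb n y)) => n _.
  by have := hb n y; rewrite ler_norml => /andP [].
have hlblf : blf hl by split => //; split => //; exists 1 => y; rewrite mul1r.
have Tx00 : T x0 != 0 by rewrite -normr_gt0 attain.
have cTS : 0 <= opnorm T + nS by apply: addr_ge0 => //; apply: ltW.
have hlT : hl (T x0) = `|T x0|.
  apply/eqP; rewrite eq_le; apply/andP; split; first exact: le_trans (ler_norm _) (hlb _).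
  apply/ler_addgt0Pr => e' e'0.
  have [N hN] := einv_small (2 * (opnorm T + nS)) e' (mulr_ge0 (ler0n _ 2) cTS) e'0.
  suff : `|T x0| - e' <= hl (T x0) by lra.
  apply: (ulim_ge U UF hoo _ _ _ N (fun n => hb n (T x0))) => n nN.
  have := hN n nN; rewrite -/(e n) => hNn.
  case: (hh n) => _ _ _ _ [_ hy].
  set yn := T (xf n) + tf n *: S (xf n) in hy *.
  have hyn : hf n yn = `|yn| by case: (hs n) => _ [].
  have E : hf n (T x0) = hf n yn - hf n (yn - T x0) by rewrite (blfB (hf n) yn (T x0) (hs n).1); ring.
  have b1 := hb n (yn - T x0).
  have b2 := ler_normB yn (yn - T x0).
  have E2 : yn - (yn - T x0) = T x0 by rewrite opprB addrC subrK.
  rewrite E2 in b2.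
  have b3 : `|hf n (yn - T x0)| <= (opnorm T + nS) * e n by apply: le_trans b1 hy.
  have b4 := ler_norm (hf n (yn - T x0)).
  rewrite E hyn; move: hNn; rewrite -mulrA => hNn.
  exact: (arith1 _ _ _ _ _ _ b2 hy (le_trans b4 b3) hNn).
have hlsupp : supporting (T x0) hl.
  apply: mk_supporting => //; exact: hlb.
have hlg := guniq _ hlsupp.
rewrite -hlg.
apply/ler_addgt0Pr => e' e'0.
have [N hN] := einv_small (nS + 1) e' (addr_ge0 nS0 ler01) e'0.
suff : Psi S - e' <= hl (S x0) by lra.
apply: (ulim_ge U UF hoo _ _ _ N (fun n => hb n (S x0))) => n nN.
have := hN n nN; rewrite -/(e n) => hNn.
case: (hh n) => t0 te xe _ [hP _].
have lS := cS.1.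
have E : hf n (S (xf n)) = hf n (S x0) + hf n (S (xf n - x0)).
  by rewrite (linB S _ _ lS) (blfB (hf n) _ _ (hs n).1); ring.
have b1 := hb n (S (xf n - x0)).
have b2 := opnorm_bound S (xf n - x0) cS.
have b3 : nS * `|xf n - x0| <= nS * e n by rewrite ler_wpM2l // ltW.
have b4 := ler_norm (hf n (S (xf n - x0))).
rewrite E in hP; rewrite -/nS in b2.
exact: (arith2 _ _ _ _ _ _ _ hP (le_trans b4 (le_trans b1 (le_trans b2 b3))) te hNn).
Qed.

Lemma if_dir : smooth_point_K T.
Proof.
have Tp0 := Tp.
have Tx00 : T x0 != 0 by rewrite -normr_gt0 attain.
case: (sY _ Tx00) => _ [[g gs] guniq].
have gu h : supporting (T x0) h -> h = g by move=> hs; exact: guniq.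
have eq0 Psi S : Ksupporting T Psi -> compact_op S -> Psi S = g (S x0).
  move=> hK cS; apply/eqP; rewrite eq_le; apply/andP; split.
    exact: main_ineq.
  have cS' := compact_opZ S (-1) cS.
  have := main_ineq Psi _ g hK cS' gs gu.
  case: hK => -[_ [PZ _]] _; rewrite PZ // blfZ //; last by case: gs.
  lra.
split => //; split.
  exists (fun S => g (S x0)); apply: Ksupp_point => //; exact: attain.
move=> Phi Psi hPhi hPsi S cS; by rewrite (eq0 _ _ hPhi cS) (eq0 _ _ hPsi cS).
Qed.

End IfDir.
Lemma blf_cvg {R : realType} (Z : normedModType R) (g : Z -> R) (F : set_system nat)
  {PF : ProperFilter F} (z : nat -> Z) y :
  blf g -> z @ F --> y -> (fun n => g (z n)) @ F --> g y.
Proof.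
move=> hg hz; apply/cvgrPdist_le => eps e0.
have fn0 : 0 <= fnorm g by apply: le_trans (blf_ub g 0 hg _); rewrite ?normr0.
have p : 0 < eps / (fnorm g + 1) by rewrite divr_gt0 // ltr_wpDl.
move/cvgrPdist_le: hz => /(_ _ p); apply: filterS => n hn.
rewrite -blfB //; apply: le_trans (blf_bound g _ hg) _.
apply: le_trans (ler_wpM2l fn0 hn) _.
rewrite mulrA ler_pdivrMr ?ltr_wpDl //; nra.
Qed.

Section OnlyIf.
Context {R : realType} {X Y : normedModType R}.
Variables (T : X -> Y).
Hypotheses (rX : reflexive_space X) (sY : smooth_space Y) (cT : compact_op T)
  (T0 : T <> (fun _ => 0)) (sK : smooth_point_K T).

Let Tp : 0 < opnorm T := opnorm_gt0 T cT T0.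

Lemma weak_lim (u : nat -> X) (U : set_system nat) (UF : UltraFilter U)
  (hoo : forall B, (\oo : set_system nat) B -> U B) :
  (forall n, `|u n| <= 1) ->
  exists w, forall f, blf f -> f w = ulim U (fun n => f (u n)).
Proof.
move=> u1.
have bu f : blf f -> forall n, `|f (u n)| <= fnorm f by move=> hf n; exact: blf_ub.
suff [w hw] : exists w, forall f, blf f -> ulim U (fun n => f (u n)) = f w.
  by exists w => f hf; rewrite hw.
apply: (rX (fun F => ulim U (fun n => F (u n)))).
- move=> f g hf hg; exact: (ulimD U UF _ _ _ _ (bu f hf) (bu g hg)).
- move=> a f hf; exact: (ulimM U UF _ a _ (bu f hf)).
- exists 1 => f hf; rewrite mul1r ler_norml; apply/andP; split.
    apply: (ulim_ge U UF hoo _ _ _ 0%N (bu f hf)) => n _.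
    by have := bu f hf n; rewrite ler_norml => /andP [].
  apply: (ulim_le U UF hoo _ _ _ 0%N (bu f hf)) => n _.
  by have := bu f hf n; rewrite ler_norml => /andP [].
Qed.

Lemma maxseq_lim (u : nat -> X) (U : set_system nat) (UF : UltraFilter U)
  (hoo : forall B, (\oo : set_system nat) B -> U B) w :
  (forall n, `|u n| = 1) -> (forall n, opnorm T - n.+1%:R^-1 < `|T (u n)|) ->
  (forall f, blf f -> f w = ulim U (fun n => f (u n))) ->
  `|w| = 1 /\ `|T w| = opnorm T.
Proof.
move=> u1 uT hw; have Tp0 := Tp.
have lT := cT.1.
have Kz : forall n, closure (T @` @cball1 R X) (T (u n)).
  by move=> n; apply: subset_closure; exists (u n) => //; rewrite /cball1 /= u1.
have [y hy] := ultra_cpt_cvg Y U UF (fun n => T (u n)) _ cT.2 Kz.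
have gT g : blf g -> blf (fun x => g (T x)).
  move=> hg; split; first by move=> a b; rewrite lT.1 blfD.
  split; first by move=> a b; rewrite lT.2 blfZ.
  exists (fnorm g * opnorm T) => x; apply: le_trans (blf_bound g _ hg) _.
  rewrite -mulrA ler_wpM2l //; last exact: opnorm_bound.
  by apply: le_trans (blf_ub g 0 hg _); rewrite ?normr0.
have yT : y = T w.
  have hg0 g : blf g -> g (y - T w) = 0.
    move=> hg; rewrite blfB // (hw _ (gT g hg)).
    rewrite (ulim_eq U UF _ _ (blf_cvg Y g U _ y hg hy)); exact: subrr.
  apply/eqP; rewrite -subr_eq0; apply/eqP; apply: contrapT => /eqP ne.
  case: (sY _ ne) => _ [[g [hg [_ gy]]] _].
  by move: gy; rewrite (hg0 g) // => /esym /eqP; rewrite normr_eq0; apply/negP.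
have hn : (fun n => `|T (u n)|) @ U --> `|y| by apply: cvg_norm.
have Tw : `|T w| = opnorm T.
  rewrite -yT; apply/eqP; rewrite eq_le; apply/andP; split.
    apply: (cvgr_to_le hn); apply: filterS filterT => n _ /=.
    by apply: opnorm_ub; rewrite ?u1.
  apply/ler_addgt0Pr => e e0.
  have [N hN] := einv_small 1 e ler01 e0.
  suff : opnorm T - e <= `|y| by lra.
  apply: (cvgr_to_ge hn); apply: (oo_U U hoo _ N) => n nN /=.
  have h2 := hN n nN; rewrite mul1r in h2.
  by apply/ltW/(le_lt_trans _ (uT n)); apply: lerB.
split => //.
have [f [hf [fb fw]]] := HB_norming w.
apply/eqP; rewrite eq_le; apply/andP; split.
  rewrite -fw hw //; apply: (ulim_le U UF hoo _ 1 _ 0%N) => n.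
    by rewrite -(u1 n).
  by move=> _; apply: le_trans (ler_norm _) _; rewrite -(u1 n).
have := opnorm_bound T w cT; rewrite Tw => h.
by rewrite -(ler_pM2l Tp0) mulr1.
Qed.


Lemma attain_unique w v : `|w| = 1 -> `|T w| = opnorm T -> `|v| = 1 -> `|T v| = opnorm T ->
  v = w \/ v = - w.
Proof.
move=> w1 Tw v1 Tv; have Tp0 := Tp.
have Tw0 : T w != 0 by rewrite -normr_gt0 Tw.
have Tv0 : T v != 0 by rewrite -normr_gt0 Tv.
case: (sY _ Tw0) => _ [[gw gws] _].
case: (sY _ Tv0) => _ [[gv gvs] _].
have Kw := Ksupp_point T w gw cT w1 Tw Tp0 gws.
have Kv := Ksupp_point T v gv cT v1 Tv Tp0 gvs.
have eqK := sK.2.2 _ _ Kw Kv.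
pose lam := gv (T w) / opnorm T.
have hf f : blf f -> f (w - lam *: v) = 0.
  move=> hf; have := eqK _ (compact_op_rank1 f (T w) hf) => /=.
  rewrite (blfZ gw _ _ gws.1) (blfZ gv _ _ gvs.1).
  have -> : gw (T w) = opnorm T by rewrite gws.2.2 Tw.
  move=> E; rewrite blfB // blfZ // /lam.
  have -> : f w = f v * gv (T w) / opnorm T by rewrite -E mulfK // lt0r_neq0.
  ring.
have wl : w = lam *: v by apply/eqP; rewrite -subr_eq0; apply/eqP; apply: HB_sep.
have l1 : `|lam| = 1 by move: w1; rewrite wl normrZ v1 mulr1.
have [l0|l0] := lerP 0 lam.
  left; move: l1; rewrite ger0_norm // => l1; by rewrite wl l1 scale1r.
right; move: l1; rewrite ltr0_norm // => /eqP; rewrite eqr_oppLR => /eqP l1.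
by rewrite wl l1 scaleN1r opprK.
Qed.


Lemma only_if : kadets_klee X -> exists x0 : X, `|x0| = 1 /\
  forall eps : R, 0 < eps -> exists d0 : R, 0 < d0 /\
    forall delta : R, 0 < delta -> delta <= d0 -> delta < opnorm T ->
      M_T T delta `<=` oball x0 eps `|` oball (- x0) eps.
Proof.
move=> kk; have Tp0 := Tp.
pose e (n : nat) : R := n.+1%:R^-1.
have e0 n : 0 < e n by rewrite /e invr_gt0 ltr0n.
have mx n : exists x, `|x| = 1 /\ opnorm T - e n < `|T x|.
  have d0 : 0 < Num.min (e n) (opnorm T) by rewrite lt_min e0.
  have dT : Num.min (e n) (opnorm T) <= opnorm T by rewrite ge_min lexx orbT.
  have [x [x1 hx]] := near_max T _ cT d0 dT.
  exists x; split => //; apply: le_lt_trans hx; apply: lerB => //.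
  by rewrite ge_min lexx.
have [u0 hu0] := choice mx.
have [U0 [UF0 [hoo0 _]]] := exists_ultra setT (fun N => ex_intro _ N (conj (leqnn N) I)).
have [x0 hx0] := weak_lim u0 U0 UF0 hoo0 (fun n => ltac:(by rewrite (hu0 n).1)).
have [x01 Tx0] := maxseq_lim u0 U0 UF0 hoo0 x0 (fun n => (hu0 n).1) (fun n => (hu0 n).2) hx0.
exists x0; split => // eps eps0.
apply: contrapT => Hneg.
have bad n : exists x, [/\ `|x| = 1, opnorm T - e n < `|T x|, eps <= `|x - x0| & eps <= `|x + x0|].
  apply: contrapT => hn; apply: Hneg; exists (e n); split => // d d0 dle dlt x [x1 hx].
  apply: contrapT => hnx; apply: hn; exists x; split => //.
  - by apply: le_lt_trans hx; apply: lerB.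
  - by rewrite leNgt; apply/negP => h; apply: hnx; left.
  - by rewrite leNgt; apply/negP => h; apply: hnx; right; rewrite /oball /= opprK.
have [xs hxs] := choice bad.
have [f0 [hf0 [f0b f0x]]] := HB_norming x0.
pose u n := if 0 <= f0 (xs n) then xs n else - xs n.
have lT := cT.1.
have u1 n : `|u n| = 1 by rewrite /u; case: ifP; rewrite ?normrN; case: (hxs n).
have uT n : opnorm T - e n < `|T (u n)|.
  by rewrite /u; case: ifP; rewrite ?(linN T _ lT) ?normrN; case: (hxs n).
have ue n : eps <= `|u n - x0|.
  rewrite /u; case: ifP; first by case: (hxs n).
  by rewrite -opprD normrN; case: (hxs n).
have uf0 n : 0 <= f0 (u n).
  rewrite /u; case: ifP => // /negbT; rewrite -ltNge blfN // oppr_ge0 => h; exact: ltW.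
have wk : weak_cvg u x0.
  move=> f hf; apply: contrapT => nc.
  have [eta [eta0 heta]] : exists eta : R, 0 < eta /\
      forall N, exists n, (N <= n)%N /\ eta < `|f x0 - f (u n)|.
    apply: contrapT => hn; apply: nc; apply/cvgrPdist_le => eta eta0.
    apply: contrapT => hN; apply: hn; exists eta; split => // N.
    apply: contrapT => hNn; apply: hN; exists N => // n /= nN.
    by rewrite leNgt; apply/negP => h; apply: hNn; exists n.
  pose A := [set n | eta < `|f x0 - f (u n)|].
  have [U [UF [hoo UA]]] := exists_ultra A heta.
  have [w hw] := weak_lim u U UF hoo (fun n => ltac:(by rewrite u1)).
  have [w1 Tw] := maxseq_lim u U UF hoo w u1 uT hw.
  have bf0 n : `|f0 (u n)| <= 1 by rewrite -(u1 n).
  have f0w : 0 <= f0 w.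
    by rewrite (hw _ hf0); apply: (ulim_ge U UF hoo _ _ _ 0%N bf0) => n _.
  have wx0 : w = x0.
    case: (attain_unique x0 w x01 Tx0 w1 Tw) => // wE.
    by move: f0w; rewrite wE blfN // f0x x01 oppr_ge0 ler10.
  have bf n : `|f (u n)| <= fnorm f by apply: blf_ub => //; rewrite u1.
  have cv := ulimP U UF _ _ bf.
  rewrite -(hw _ hf) wx0 in cv.
  move/cvgrPdist_lt: cv => /(_ _ eta0) cv.
  have hI : U ([set n | `|f x0 - f (u n)| < eta] `&` A) by apply: filterI.
  have [n [h1 h2]] := filter_ex hI.
  by move: h2; rewrite /A /= ltNge ltW.
have nu : (fun n => `|u n|) @ \oo --> `|x0|.
  have -> : (fun n => `|u n|) = (fun _ => `|x0|) by apply: funext => n; rewrite u1 x01.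
  exact: cvg_cst.
have := kk u x0 wk nu.
move/cvgrPdist_lt => /(_ _ eps0) [N _ HN].
have := HN N (leqnn N); rewrite /= sub0r normrN normr_id ltNge.
by rewrite ue.
Qed.

End OnlyIf.

Theorem theorem2p3 (R : realType) (X Y : completeNormedModType R) (T : X -> Y) :
  reflexive_space X -> dim_gt1 X -> dim_gt1 Y -> smooth_space Y ->
  compact_op T -> T <> (fun _ => 0) ->
  let cond := exists x0 : X, x0 \in @sphere1 R X /\
      forall eps : R, 0 < eps -> exists d0 : R, 0 < d0 /\
        forall delta : R, 0 < delta -> delta <= d0 -> delta < opnorm T ->
          M_T T delta `<=` oball x0 eps `|` oball (- x0) eps in
  (kadets_klee X -> (smooth_point_K T <-> cond)) /\ (cond -> smooth_point_K T).
Proof.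
move=> rX dX dY sY cT T0 cond.
have hif : cond -> smooth_point_K T.
  move=> [x0 [/set_mem x01 H]]; exact: (if_dir T x0 sY cT T0 x01 H).
split => //; move=> kk; split => // sK.
have [x0 [x01 H]] := only_if T rX sY cT T0 sK kk.
by exists x0; split => //; apply: mem_set.
Qed.
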